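(* Assume in addition that, for $i=1,2$, $\phi_i$ is differentiable with $L_{\phi_i}$-Lipschitz continuous gradient ($L_{\phi_i}\ge0$). Let $\beta_1,\beta_2>0$, $\tau\in(0,1)$, and suppose $(\bar x,\bar y)\in X\times\mathbb{R}^m$ satisfies $f(\bar x;\beta_2)\le d(\bar y;\beta_1)$. Set $\beta_1^+:=(1-\tau)\beta_1$, $\beta_2^+:=(1-\tau)\beta_2$, $\hat x:=(1-\tau)\bar x+\tau x^*(\bar y;\beta_1)$, $\bar y^+:=(1-\tau)\bar y+\tau y^*(\hat x;\beta_2^+)$, and $\hat{\bar x}^+:=(G_1(\hat x;\beta_2^+),G_2(\hat x;\beta_2^+))$, where with $\hat L_i^\psi(\beta_2^+):=L_{\phi_i}+\frac{2\|A_i\|^2}{\beta_2^+}$, $$G_i(\hat x;\beta_2^+):=\arg\min_{x_i\in X_i}\Big\{\nabla\phi_i(\hat x_i)^T(x_i-\hat x_i)+y^*(\hat x;\beta_2^+)^TA_i(x_i-\hat x_i)+\frac{\hat L_i^\psi(\beta_2^+)}{2}\|x_i-\hat x_i\|^2\Big\}.$$ If $$\frac{1-\tau}{\tau^2}\beta_1\sigma_i\ge L_{\phi_i}+\frac{2\|A_i\|^2}{(1-\tau)\beta_2},\qquad i=1,2,$$ then $(\hat{\bar x}^+,\bar y^+)\in X\times\mathbb{R}^m$ and $f(\hat{\bar x}^+;\beta_2^+)\le d(\bar y^+;\beta_1^+)$.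
   Context: All spaces carry the Euclidean inner product and norm $\|\cdot\|$; for a matrix, $\|\cdot\|$ is the induced operator norm. For $i=1,2$: $X_i\subset\mathbb{R}^{n_i}$ is nonempty, closed, convex and bounded; $\phi_i:\mathbb{R}^{n_i}\to\mathbb{R}$ is convex; $A_i\in\mathbb{R}^{m\times n_i}$; $b\in\mathbb{R}^m$. Write $x=(x_1,x_2)$, $X=X_1\times X_2$, $A=[A_1,A_2]$ (so $Ax=A_1x_1+A_2x_2$), $\phi(x)=\phi_1(x_1)+\phi_2(x_2)$. For $i=1,2$, $p_i$ is a prox-function of $X_i$: continuous and strongly convex on $X_i$ with convexity parameter $\sigma_i>0$, with prox-center $x_i^c=\arg\min_{x_i\in X_i}p_i(x_i)$ normalized so $p_i(x_i^c)=0$. For $\beta_1>0$, $d(y;\beta_1):=\min_{x\in X}\{\phi(x)+y^T(Ax-b)+\beta_1(p_1(x_1)+p_2(x_2))\}$, whose (unique) minimizer is denoted $x^*(y;\beta_1)$. For $\beta_2>0$, $y^*(x;\beta_2):=\frac{1}{\beta_2}(Ax-b)$ and $f(x;\beta_2):=\phi(x)+\frac{1}{2\beta_2}\|Ax-b\|^2$. *)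

(* Defs.v *)
From Stdlib Require Import Reals Lra ClassicalEpsilon.
From Stdlib Require Fin.
Open Scope R_scope.

Definition vec (n : nat) := Fin.t n -> R.
Definition mat (m n : nat) := Fin.t m -> Fin.t n -> R.

Fixpoint vsum (n : nat) : (Fin.t n -> R) -> R :=
  match n return (Fin.t n -> R) -> R with
  | O => fun _ => 0
  | S k => fun f => f Fin.F1 + vsum k (fun i => f (Fin.FS i))
  end.

Definition vzero {n} : vec n := fun _ => 0.
Definition vadd {n} (u v : vec n) : vec n := fun i => u i + v i.
Definition vsub {n} (u v : vec n) : vec n := fun i => u i - v i.
Definition vscale {n} (a : R) (u : vec n) : vec n := fun i => a * u i.
Definition dot {n} (u v : vec n) : R := vsum n (fun i => u i * v i).
Definition vnorm {n} (u : vec n) : R := sqrt (dot u u).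
Definition mv {m n} (A : mat m n) (x : vec n) : vec m :=
  fun i => vsum n (fun j => A i j * x j).

(* Generic argmin over a set (chosen by Hilbert's epsilon; meaningful when a
   minimizer exists, which is the case in all uses below). *)
Definition argmin {T : Type} (inh : inhabited T) (S : T -> Prop) (F : T -> R) : T :=
  epsilon inh (fun x => S x /\ forall z, S z -> F x <= F z).

Definition vinh (n : nat) : inhabited (vec n) := inhabits vzero.

Definition is_opnorm {m n} (A : mat m n) (c : R) : Prop :=
  is_lub (fun r => exists x : vec n, vnorm x <= 1 /\ r = vnorm (mv A x)) c.
Definition opnorm {m n} (A : mat m n) : R := epsilon (inhabits 0) (is_opnorm A).

Definition vnonempty {n} (S : vec n -> Prop) : Prop := exists x, S x.
Definition vconvex_set {n} (S : vec n -> Prop) : Prop :=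
  forall x y t, S x -> S y -> 0 <= t <= 1 ->
    S (vadd (vscale t x) (vscale (1 - t) y)).
Definition vclosed {n} (S : vec n -> Prop) : Prop :=
  forall (u : nat -> vec n) (x : vec n), (forall k, S (u k)) ->
    (forall eps, eps > 0 -> exists N, forall k, (k >= N)%nat -> vnorm (vsub (u k) x) < eps) ->
    S x.
Definition vbounded {n} (S : vec n -> Prop) : Prop :=
  exists M, forall x, S x -> vnorm x <= M.

Definition convex_fun {n} (f : vec n -> R) : Prop :=
  forall x y t, 0 <= t <= 1 ->
    f (vadd (vscale t x) (vscale (1 - t) y)) <= t * f x + (1 - t) * f y.
Definition vcontinuous_on {n} (S : vec n -> Prop) (f : vec n -> R) : Prop :=
  forall x, S x -> forall eps, eps > 0 -> exists delta, delta > 0 /\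
    forall y, S y -> vnorm (vsub y x) < delta -> Rabs (f y - f x) < eps.
Definition strongly_convex_on {n} (S : vec n -> Prop) (sigma : R) (f : vec n -> R) : Prop :=
  forall x y t, S x -> S y -> 0 <= t <= 1 ->
    f (vadd (vscale t x) (vscale (1 - t) y)) <=
      t * f x + (1 - t) * f y - sigma / 2 * t * (1 - t) * (vnorm (vsub x y))^2.
(* p is a prox-function of S with convexity parameter sigma, normalized at its prox-center *)
Definition prox_function {n} (S : vec n -> Prop) (sigma : R) (p : vec n -> R) : Prop :=
  vcontinuous_on S p /\ strongly_convex_on S sigma p /\ p (argmin (vinh n) S p) = 0.
Definition is_gradient {n} (f : vec n -> R) (g : vec n -> vec n) : Prop :=
  forall x eps, eps > 0 -> exists delta, delta > 0 /\
    forall h, vnorm h < delta ->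
      Rabs (f (vadd x h) - f x - dot (g x) h) <= eps * vnorm h.
Definition lipschitz {n} (g : vec n -> vec n) (L : R) : Prop :=
  forall x y, vnorm (vsub (g x) (g y)) <= L * vnorm (vsub x y).

Section Problem.
Context {n1 n2 m : nat}
  (X1 : vec n1 -> Prop) (X2 : vec n2 -> Prop)
  (phi1 : vec n1 -> R) (phi2 : vec n2 -> R)
  (A1 : mat m n1) (A2 : mat m n2) (b : vec m)
  (p1 : vec n1 -> R) (p2 : vec n2 -> R).

Definition Xprod (x : vec n1 * vec n2) : Prop := X1 (fst x) /\ X2 (snd x).
Definition Aop (x : vec n1 * vec n2) : vec m := vadd (mv A1 (fst x)) (mv A2 (snd x)).
Definition phi (x : vec n1 * vec n2) : R := phi1 (fst x) + phi2 (snd x).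
Definition prodinh : inhabited (vec n1 * vec n2) := inhabits (vzero, vzero).

Definition dobj (y : vec m) (beta1 : R) (x : vec n1 * vec n2) : R :=
  phi x + dot y (vsub (Aop x) b) + beta1 * (p1 (fst x) + p2 (snd x)).
Definition xstar (y : vec m) (beta1 : R) : vec n1 * vec n2 :=
  argmin prodinh Xprod (dobj y beta1).
Definition dfun (y : vec m) (beta1 : R) : R := dobj y beta1 (xstar y beta1).
Definition ystar (x : vec n1 * vec n2) (beta2 : R) : vec m :=
  vscale (1 / beta2) (vsub (Aop x) b).
Definition ffun (x : vec n1 * vec n2) (beta2 : R) : R :=
  phi x + 1 / (2 * beta2) * (vnorm (vsub (Aop x) b))^2.
End Problem.

Definition Gblock {n m : nat} (Xi : vec n -> Prop) (gradi : vec n -> vec n)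
  (Ai : mat m n) (Lhat : R) (ys : vec m) (xhi : vec n) : vec n :=
  argmin (vinh n) Xi (fun z =>
    dot (gradi xhi) (vsub z xhi) + dot ys (mv Ai (vsub z xhi))
    + Lhat / 2 * (vnorm (vsub z xhi))^2).

(* Main.v *)
Require Import Defs.
From Stdlib Require Import Reals Lra Psatz ClassicalEpsilon FunctionalExtensionality Classical.
From Stdlib Require Fin.
Open Scope R_scope.

Lemma vsum_add n f g : vsum n (fun i => f i + g i) = vsum n f + vsum n g.
Proof. induction n; simpl. ring. rewrite (IHn (fun i => f (Fin.FS i)) (fun i => g (Fin.FS i))). ring. Qed.
Lemma vsum_scale n c f : vsum n (fun i => c * f i) = c * vsum n f.
Proof. induction n; simpl. ring. rewrite (IHn (fun i => f (Fin.FS i))). ring. Qed.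
Lemma vsum_le n f g : (forall i, f i <= g i) -> vsum n f <= vsum n g.
Proof. induction n; simpl; intros H. lra.
  specialize (IHn (fun i => f (Fin.FS i)) (fun i => g (Fin.FS i)) (fun i => H (Fin.FS i))).
  specialize (H Fin.F1). lra. Qed.
Lemma vsum_zero n : vsum n (fun _ => 0) = 0.
Proof. induction n; simpl. ring. rewrite IHn. ring. Qed.
Lemma vsum_nonneg n f : (forall i, 0 <= f i) -> 0 <= vsum n f.
Proof. intros H. rewrite <- (vsum_zero n). apply vsum_le. exact H. Qed.
Lemma vsum_term n (i : Fin.t n) : forall f, (forall j, 0 <= f j) -> f i <= vsum n f.
Proof. induction i; intros f Hf; simpl.
  - pose proof (vsum_nonneg n (fun j => f (Fin.FS j)) (fun j => Hf _)). lra.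
  - pose proof (IHi (fun j => f (Fin.FS j)) (fun j => Hf _)). pose proof (Hf Fin.F1). lra. Qed.

Lemma dot_comm {n} (u v : vec n) : dot u v = dot v u.
Proof. unfold dot. f_equal. extensionality i. ring. Qed.
Lemma dot_add_l {n} (u v w : vec n) : dot (vadd u v) w = dot u w + dot v w.
Proof. unfold dot, vadd. rewrite <- vsum_add. f_equal. extensionality i. ring. Qed.
Lemma dot_add_r {n} (u v w : vec n) : dot w (vadd u v) = dot w u + dot w v.
Proof. unfold dot, vadd. rewrite <- vsum_add. f_equal. extensionality i. ring. Qed.
Lemma dot_sub_l {n} (u v w : vec n) : dot (vsub u v) w = dot u w - dot v w.
Proof. unfold dot, vsub. replace (vsum n (fun i => u i * w i) - vsum n (fun i => v i * w i))
  with (vsum n (fun i => u i * w i) + (-1) * vsum n (fun i => v i * w i)) by ring.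
  rewrite <- vsum_scale, <- vsum_add. f_equal. extensionality i. ring. Qed.
Lemma dot_sub_r {n} (u v w : vec n) : dot w (vsub u v) = dot w u - dot w v.
Proof. rewrite (dot_comm w), (dot_comm w u), (dot_comm w v). apply dot_sub_l. Qed.
Lemma dot_scale_l {n} c (u w : vec n) : dot (vscale c u) w = c * dot u w.
Proof. unfold dot, vscale. rewrite <- vsum_scale. f_equal. extensionality i. ring. Qed.
Lemma dot_scale_r {n} c (u w : vec n) : dot w (vscale c u) = c * dot w u.
Proof. unfold dot, vscale. rewrite <- vsum_scale. f_equal. extensionality i. ring. Qed.
Lemma dot_nonneg {n} (u : vec n) : 0 <= dot u u.
Proof. apply vsum_nonneg. intros i. nra. Qed.

Lemma mv_add {m n} (A : mat m n) u v : mv A (vadd u v) = vadd (mv A u) (mv A v).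
Proof. unfold mv, vadd. extensionality i. rewrite <- vsum_add. f_equal. extensionality j. ring. Qed.
Lemma mv_scale {m n} (A : mat m n) c u : mv A (vscale c u) = vscale c (mv A u).
Proof. unfold mv, vscale. extensionality i. rewrite <- vsum_scale. f_equal. extensionality j. ring. Qed.
Lemma mv_sub {m n} (A : mat m n) u v : mv A (vsub u v) = vsub (mv A u) (mv A v).
Proof. replace (vsub u v) with (vadd u (vscale (-1) v)) by (extensionality i; unfold vsub, vadd, vscale; ring).
  rewrite mv_add, mv_scale. extensionality i. unfold vsub, vadd, vscale. ring. Qed.

Lemma vnorm_nonneg {n} (u : vec n) : 0 <= vnorm u.
Proof. apply sqrt_pos. Qed.
Lemma vnorm_sq {n} (u : vec n) : vnorm u ^ 2 = dot u u.
Proof. unfold vnorm. apply pow2_sqrt, dot_nonneg. Qed.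

Lemma sq_le_le a b : 0 <= a -> 0 <= b -> a ^ 2 <= b ^ 2 -> a <= b.
Proof. intros. destruct (Rle_or_lt a b); auto. nra. Qed.

Lemma CS_sq {n} (u v : vec n) : dot u v ^ 2 <= dot u u * dot v v.
Proof.
  assert (H : forall t, 0 <= dot u u + 2 * t * dot u v + t ^ 2 * dot v v).
  { intros t. pose proof (dot_nonneg (vadd u (vscale t v))) as H.
    rewrite !dot_add_l, !dot_add_r, !dot_scale_l, !dot_scale_r, (dot_comm v u) in H. nra. }
  pose proof (dot_nonneg u). pose proof (dot_nonneg v).
  destruct (Req_dec (dot v v) 0) as [E|E].
  - destruct (Req_dec (dot u v) 0) as [E2|E2]. rewrite E, E2. nra.
    specialize (H (- (dot u u + 1) / (2 * dot u v))). rewrite E in H.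
    assert (2 * (- (dot u u + 1) / (2 * dot u v)) * dot u v = - (dot u u + 1)) by (field; auto).
    exfalso. nra.
  - specialize (H (- dot u v / dot v v)).
    assert (0 < dot v v) by lra.
    replace (dot u u + 2 * (- dot u v / dot v v) * dot u v + (- dot u v / dot v v) ^ 2 * dot v v)
      with ((dot u u * dot v v - dot u v ^ 2) / dot v v) in H by (field; auto).
    assert (0 <= dot u u * dot v v - dot u v ^ 2); [|lra].
    apply Rmult_le_compat_r with (r := dot v v) in H; [|lra].
    unfold Rdiv in H. rewrite Rmult_assoc, Rinv_l, Rmult_1_r, Rmult_0_l in H; auto. Qed.

Lemma CS {n} (u v : vec n) : Rabs (dot u v) <= vnorm u * vnorm v.
Proof. apply sq_le_le. apply Rabs_pos. pose proof (vnorm_nonneg u); pose proof (vnorm_nonneg v); nra.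
  rewrite pow2_abs, Rpow_mult_distr, !vnorm_sq. apply CS_sq. Qed.

Lemma sq_eq a b : 0 <= a -> 0 <= b -> a ^ 2 = b ^ 2 -> a = b.
Proof. intros. apply Rle_antisym; apply sq_le_le; lra. Qed.

Lemma vnorm_scale {n} c (u : vec n) : vnorm (vscale c u) = Rabs c * vnorm u.
Proof. apply sq_eq. apply vnorm_nonneg. pose proof (Rabs_pos c); pose proof (vnorm_nonneg u); nra.
  rewrite Rpow_mult_distr, pow2_abs, !vnorm_sq, dot_scale_l, dot_scale_r. ring. Qed.

Lemma vnorm_triangle {n} (u v : vec n) : vnorm (vadd u v) <= vnorm u + vnorm v.
Proof. apply sq_le_le. apply vnorm_nonneg. pose proof (vnorm_nonneg u); pose proof (vnorm_nonneg v); nra.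
  rewrite vnorm_sq, dot_add_l, !dot_add_r, (dot_comm v u).
  pose proof (CS u v). pose proof (Rle_abs (dot u v)).
  replace ((vnorm u + vnorm v) ^ 2) with (vnorm u ^ 2 + vnorm v ^ 2 + 2 * (vnorm u * vnorm v)) by ring.
  rewrite !vnorm_sq. lra. Qed.

Lemma coord_le {n} (u : vec n) i : Rabs (u i) <= vnorm u.
Proof. apply sq_le_le. apply Rabs_pos. apply vnorm_nonneg. rewrite pow2_abs, vnorm_sq.
  unfold dot. assert (H := vsum_term n i (fun j => u j * u j) (fun j => ltac:(nra))).
  simpl in H. nra. Qed.

Definition vtl {n} (u : vec (S n)) : vec n := fun i => u (Fin.FS i).

Lemma vnorm_S {n} (u : vec (S n)) : vnorm u <= Rabs (u Fin.F1) + vnorm (vtl u).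
Proof. apply sq_le_le. apply vnorm_nonneg. pose proof (Rabs_pos (u Fin.F1)); pose proof (vnorm_nonneg (vtl u)); nra.
  rewrite vnorm_sq. change (dot u u) with (u Fin.F1 * u Fin.F1 + dot (vtl u) (vtl u)).
  rewrite <- vnorm_sq. pose proof (Rabs_pos (u Fin.F1)); pose proof (vnorm_nonneg (vtl u)).
  replace (u Fin.F1 * u Fin.F1) with (Rabs (u Fin.F1) ^ 2) by (rewrite pow2_abs; ring). nra. Qed.

Definition mxC {m n} (A : mat m n) : R := sqrt (vsum m (fun i => dot (A i) (A i))).

Lemma mv_bound {m n} (A : mat m n) x : vnorm (mv A x) <= mxC A * vnorm x.
Proof. apply sq_le_le. apply vnorm_nonneg. pose proof (sqrt_pos (vsum m (fun i => dot (A i) (A i)))).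
  pose proof (vnorm_nonneg x). unfold mxC. nra.
  rewrite Rpow_mult_distr, !vnorm_sq. unfold mxC. rewrite pow2_sqrt.
  2:{ apply vsum_nonneg. intros; apply dot_nonneg. }
  unfold dot at 1. rewrite (Rmult_comm _ (dot x x)), <- vsum_scale. apply vsum_le. intros i.
  change (mv A x i) with (dot (A i) x). pose proof (CS_sq (A i) x). nra. Qed.

Lemma opnorm_spec {m n} (A : mat m n) : is_opnorm A (opnorm A).
Proof. unfold opnorm. apply epsilon_spec.
  destruct (completeness (fun r => exists x : vec n, vnorm x <= 1 /\ r = vnorm (mv A x))) as [c Hc].
  - exists (mxC A). intros r [x [Hx ->]]. pose proof (mv_bound A x).
    pose proof (sqrt_pos (vsum m (fun i => dot (A i) (A i)))). unfold mxC in *.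
    pose proof (vnorm_nonneg x). nra.
  - exists (vnorm (mv A vzero)). exists vzero. split; auto.
    unfold vnorm, dot, vzero. rewrite <- (vsum_zero n). rewrite (vsum_zero n). 
    replace (fun i : Fin.t n => 0 * 0) with (fun _ : Fin.t n => 0) by (extensionality i; ring).
    rewrite vsum_zero, sqrt_0. lra.
  - exists c. exact Hc. Qed.

Lemma opnorm_bound {m n} (A : mat m n) h : vnorm (mv A h) <= opnorm A * vnorm h.
Proof. pose proof (opnorm_spec A) as [Hub _].
  destruct (Req_dec (vnorm h) 0) as [E|E].
  - pose proof (mv_bound A h). rewrite E in *. rewrite Rmult_0_r in *. auto.
  - pose proof (vnorm_nonneg h). 
    assert (H1 : vnorm (vscale (/ vnorm h) h) <= 1).
    { rewrite vnorm_scale, Rabs_right. rewrite Rinv_l; auto; lra. apply Rle_ge, Rlt_le, Rinv_0_lt_compat; lra. }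
    specialize (Hub _ (ex_intro _ _ (conj H1 eq_refl))).
    rewrite mv_scale, vnorm_scale, Rabs_right in Hub. 2:{ apply Rle_ge, Rlt_le, Rinv_0_lt_compat; lra. }
    apply Rmult_le_compat_r with (r := vnorm h) in Hub; [|lra].
    rewrite Rmult_comm, <- Rmult_assoc, Rinv_r in Hub; auto. lra. Qed.

Lemma vnorm_zero n : vnorm (@vzero n) = 0.
Proof. unfold vnorm, dot, vzero. replace (fun i : Fin.t n => 0 * 0) with (fun _ : Fin.t n => 0) by (extensionality i; ring).
  rewrite vsum_zero, sqrt_0. lra. Qed.
Lemma mv_zero {m n} (A : mat m n) : mv A vzero = vzero.
Proof. unfold mv, vzero. extensionality i. replace (fun j : Fin.t n => A i j * 0) with (fun _ : Fin.t n => 0) by (extensionality j; ring).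
  apply vsum_zero. Qed.

Lemma opnorm_nonneg {m n} (A : mat m n) : 0 <= opnorm A.
Proof. pose proof (opnorm_spec A) as [Hub _]. apply Hub. exists vzero. split.
  rewrite vnorm_zero; lra. rewrite mv_zero, vnorm_zero. auto. Qed.

Lemma small_inv eps : 0 < eps -> exists N, forall k, (N <= k)%nat -> / (INR k + 1) < eps.
Proof. intros He. destruct (archimed_cor1 eps He) as [N [HN HN0]]. exists N. intros k Hk.
  apply le_INR in Hk. apply lt_INR in HN0. simpl in HN0.
  apply Rle_lt_trans with (/ INR N); auto. apply Rinv_le_contravar; lra. Qed.

Lemma big_nat r : exists N, forall k, (N <= k)%nat -> r < INR k.
Proof. destruct (small_inv (/ (Rabs r + 1))) as [N HN].
  apply Rinv_0_lt_compat. pose proof (Rabs_pos r); lra.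
  exists N. intros k Hk. specialize (HN k Hk). pose proof (pos_INR k). pose proof (Rle_abs r).
  destruct (Rlt_or_le r (INR k)); auto.
  assert (/ (Rabs r + 1) <= / (INR k + 1)). apply Rinv_le_contravar; lra. lra. Qed.

Definition incr (phi : nat -> nat) := forall k, (phi k < phi (S k))%nat.
Lemma incr_ge phi : incr phi -> forall k, (k <= phi k)%nat.
Proof. intros H k. induction k. lia. specialize (H k). lia. Qed.
Lemma incr_mono phi : incr phi -> forall j k, (j <= k)%nat -> (phi j <= phi k)%nat.
Proof. intros H j k Hjk. induction Hjk. lia. specialize (H m). lia. Qed.

Lemma extract (P : nat -> nat -> Prop) :
  (forall k N, exists p, (N <= p)%nat /\ P k p) -> exists phi, incr phi /\ forall k, P k (phi k).
Proof. intros H.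
  set (pick := fun k N => epsilon (inhabits 0%nat) (fun p => (N <= p)%nat /\ P k p)).
  assert (Hp : forall k N, (N <= pick k N)%nat /\ P k (pick k N)).
  { intros k N. unfold pick. apply epsilon_spec. apply H. }
  set (phi := fix f k := match k with 0%nat => pick 0%nat 0%nat | S k' => pick k (S (f k')) end).
  exists phi. split.
  - intros k. simpl. destruct (Hp (S k) (S (phi k))). lia.
  - intros k. destruct k; simpl; apply Hp. Qed.

Definition convs {n} (u : nat -> vec n) x := forall eps, eps > 0 -> exists N, forall k, (k >= N)%nat -> vnorm (vsub (u k) x) < eps.

Lemma convs_sub {n} (u : nat -> vec n) x phi : convs u x -> incr phi -> convs (fun k => u (phi k)) x.
Proof. intros H Hp eps He. destruct (H eps He) as [N HN]. exists N. intros k Hk. apply HN.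
  pose proof (incr_ge phi Hp k). lia. Qed.

Lemma BW1 (u : nat -> R) M : (forall k, Rabs (u k) <= M) ->
  exists phi l, incr phi /\ forall eps, eps > 0 -> exists N, forall k, (k >= N)%nat -> Rabs (u (phi k) - l) < eps.
Proof. intros Hb.
  destruct (Bolzano_Weierstrass u (fun c => -M <= c <= M) (compact_P3 (-M) M)) as [l Hl].
  { intros k. specialize (Hb k). pose proof (Rle_abs (u k)); pose proof (Rle_abs (- u k)); rewrite Rabs_Ropp in *; lra. }
  destruct (extract (fun k p => Rabs (u p - l) < / (INR k + 1))) as [phi [Hphi HP]].
  { intros k N. assert (Hpos : 0 < / (INR k + 1)). apply Rinv_0_lt_compat. pose proof (pos_INR k). lra.
    destruct (Hl (fun y => Rabs (y - l) < / (INR k + 1)) N) as [p Hp].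
    exists (mkposreal _ Hpos). intros y Hy. exact Hy. exists p. exact Hp. }
  exists phi, l. split; auto. intros eps He. destruct (small_inv eps He) as [N HN].
  exists N. intros k Hk. specialize (HN k Hk). specialize (HP k). lra. Qed.

Lemma vnorm_vtl {n} (u : vec (S n)) : vnorm (vtl u) <= vnorm u.
Proof. apply sq_le_le; try apply vnorm_nonneg. rewrite !vnorm_sq.
  change (dot u u) with (u Fin.F1 * u Fin.F1 + dot (vtl u) (vtl u)). nra. Qed.

Definition vcons {n} (a : R) (t : vec n) : vec (S n) := fun i => Fin.caseS' i (fun _ => R) a t.

Lemma BWn n : forall (u : nat -> vec n) M, (forall k, vnorm (u k) <= M) ->
  exists phi x, incr phi /\ convs (fun k => u (phi k)) x.
Proof. induction n; intros u M Hb.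
  - exists (fun k => k), vzero. split. intros k; lia. intros eps He. exists 0%nat. intros k _.
    unfold vnorm, dot. simpl. rewrite sqrt_0. lra.
  - destruct (IHn (fun k => vtl (u k)) M) as [phi1 [xt [Hp1 Hc1]]].
    { intros k. eapply Rle_trans. apply vnorm_vtl. apply Hb. }
    destruct (BW1 (fun k => u (phi1 k) Fin.F1) M) as [phi2 [l [Hp2 Hc2]]].
    { intros k. eapply Rle_trans. apply coord_le. apply Hb. }
    exists (fun k => phi1 (phi2 k)), (vcons l xt). split.
    + intros k. pose proof (Hp2 k). pose proof (incr_mono phi1 Hp1 (S (phi2 k)) (phi2 (S k))). specialize (Hp1 (phi2 k)). lia.
    + intros eps He. destruct (Hc2 (eps/2)) as [N2 HN2]. lra.
      destruct (convs_sub _ _ _ Hc1 Hp2 (eps/2)) as [N1 HN1]. lra.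
      exists (Nat.max N1 N2). intros k Hk.
      eapply Rle_lt_trans. apply vnorm_S.
      specialize (HN2 k ltac:(lia)). specialize (HN1 k ltac:(lia)). simpl in HN1, HN2.
      change (vsub (u (phi1 (phi2 k))) (vcons l xt) Fin.F1) with (u (phi1 (phi2 k)) Fin.F1 - l).
      change (vtl (vsub (u (phi1 (phi2 k))) (vcons l xt))) with (vsub (vtl (u (phi1 (phi2 k)))) xt).
      lra. Qed.

Lemma seqcomp {n} (S : vec n -> Prop) (u : nat -> vec n) : vclosed S -> vbounded S -> (forall k, S (u k)) ->
  exists phi y, incr phi /\ S y /\ convs (fun k => u (phi k)) y.
Proof. intros Hc [M HM] Hu. destruct (BWn n u M (fun k => HM _ (Hu k))) as [phi [y [Hp Hy]]].
  exists phi, y. repeat split; auto. apply (Hc (fun k => u (phi k))); auto. Qed.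

Lemma cont_seq {n} (S : vec n -> Prop) F (w : nat -> vec n) y : vcontinuous_on S F -> S y -> (forall k, S (w k)) ->
  convs w y -> forall eps, eps > 0 -> exists N, forall k, (k >= N)%nat -> Rabs (F (w k) - F y) < eps.
Proof. intros HF Hy Hw Hc eps He. destruct (HF y Hy eps He) as [d [Hd Hd2]].
  destruct (Hc d Hd) as [N HN]. exists N. intros k Hk. apply Hd2; auto. Qed.

Lemma evt {n} (S : vec n -> Prop) F : vnonempty S -> vclosed S -> vbounded S -> vcontinuous_on S F ->
  exists x, S x /\ forall z, S z -> F x <= F z.
Proof. intros Hne Hcl Hbd HF.
  assert (Hlb : exists B, forall z, S z -> B <= F z).
  { apply NNPP. intros Hno.
    assert (H : forall k : nat, exists z, S z /\ F z < - INR k).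
    { intros k. apply NNPP. intros Hk. apply Hno. exists (- INR k). intros z Hz.
      destruct (Rle_or_lt (- INR k) (F z)); auto. exfalso. apply Hk. exists z. auto. }
    set (u := fun k => epsilon (inhabits vzero) (fun z => S z /\ F z < - INR k)).
    assert (Hu : forall k, S (u k) /\ F (u k) < - INR k). { intros k. unfold u. apply epsilon_spec. apply H. }
    destruct (seqcomp S u Hcl Hbd (fun k => proj1 (Hu k))) as [phi [y [Hp [Hy Hc]]]].
    destruct (cont_seq S F _ y HF Hy (fun k => proj1 (Hu _)) Hc 1) as [N HN]. lra.
    destruct (big_nat (1 - F y)) as [K HK].
    specialize (HN (Nat.max N K) ltac:(lia)). specialize (HK (Nat.max N K) ltac:(lia)).
    destruct (Hu (phi (Nat.max N K))) as [_ H2].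
    pose proof (le_INR _ _ (incr_ge phi Hp (Nat.max N K))).
    pose proof (Rle_abs (F (u (phi (Nat.max N K))) - F y)). pose proof (Rle_abs (-(F (u (phi (Nat.max N K))) - F y))).
    rewrite Rabs_Ropp in *. lra. }
  destruct Hlb as [B HB]. destruct Hne as [x0 Hx0].
  destruct (completeness (fun r => exists z, S z /\ r = - F z)) as [c [Hub Hlub]].
  { exists (- B). intros r [z [Hz ->]]. specialize (HB z Hz). lra. }
  { exists (- F x0). exists x0. auto. }
  assert (Hge : forall z, S z -> - c <= F z).
  { intros z Hz. assert (- F z <= c) by (apply Hub; exists z; auto). lra. }
  assert (H : forall k : nat, exists z, S z /\ F z < - c + / (INR k + 1)).
  { intros k. apply NNPP. intros Hk.
    assert (Hpos : 0 < / (INR k + 1)). apply Rinv_0_lt_compat. pose proof (pos_INR k). lra.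
    assert (c <= c - / (INR k + 1)); [|lra].
    apply Hlub. intros r [z [Hz ->]]. destruct (Rle_or_lt (- c + / (INR k + 1)) (F z)). lra.
    exfalso; apply Hk; exists z; auto. }
  set (u := fun k => epsilon (inhabits vzero) (fun z => S z /\ F z < - c + / (INR k + 1))).
  assert (Hu : forall k, S (u k) /\ F (u k) < - c + / (INR k + 1)). { intros k. unfold u. apply epsilon_spec. apply H. }
  destruct (seqcomp S u Hcl Hbd (fun k => proj1 (Hu k))) as [phi [y [Hp [Hy Hc]]]].
  exists y. split; auto. intros z Hz. specialize (Hge z Hz).
  destruct (Rle_or_lt (F y) (- c)); [lra|]. exfalso.
  set (eps := (F y + c) / 2).
  destruct (cont_seq S F _ y HF Hy (fun k => proj1 (Hu _)) Hc eps) as [N HN]. unfold eps; lra.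
  destruct (small_inv eps) as [K HK]. unfold eps; lra.
  specialize (HN (Nat.max N K) ltac:(lia)).
  specialize (HK (phi (Nat.max N K)) ltac:(pose proof (incr_ge phi Hp (Nat.max N K)); lia)).
  destruct (Hu (phi (Nat.max N K))) as [_ H2].
  pose proof (Rle_abs (-(F (u (phi (Nat.max N K))) - F y))). rewrite Rabs_Ropp in *.
  unfold eps in *. lra. Qed.

Lemma argmin_spec {n} (S : vec n -> Prop) F : vnonempty S -> vclosed S -> vbounded S -> vcontinuous_on S F ->
  S (argmin (vinh n) S F) /\ forall z, S z -> F (argmin (vinh n) S F) <= F z.
Proof. intros. unfold argmin. apply epsilon_spec. apply evt; auto. Qed.

Lemma cont_lip {n} (S : vec n -> Prop) F :
  (forall x, S x -> exists K, 0 <= K /\ forall y, S y -> vnorm (vsub y x) <= 1 -> Rabs (F y - F x) <= K * vnorm (vsub y x)) ->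
  vcontinuous_on S F.
Proof. intros H x Hx eps He. destruct (H x Hx) as [K [HK HK2]].
  exists (Rmin 1 (eps / (K + 1))). split.
  apply Rmin_pos; [lra|]. apply Rdiv_lt_0_compat; lra.
  intros y Hy Hd. pose proof (Rmin_l 1 (eps / (K+1))). pose proof (Rmin_r 1 (eps / (K+1))).
  specialize (HK2 y Hy ltac:(lra)). pose proof (vnorm_nonneg (vsub y x)).
  assert (K * vnorm (vsub y x) <= K * (eps / (K + 1))) by (apply Rmult_le_compat_l; lra).
  assert (K * (eps / (K + 1)) < eps). { assert (E : eps / (K+1) * (K+1) = eps) by (field; lra).
    assert (0 < eps / (K+1)) by (apply Rdiv_lt_0_compat; lra). nra. } lra. Qed.

Lemma cont_add {n} (S : vec n -> Prop) F G : vcontinuous_on S F -> vcontinuous_on S G ->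
  vcontinuous_on S (fun x => F x + G x).
Proof. intros HF HG x Hx eps He. destruct (HF x Hx (eps/2)) as [d1 [Hd1 H1]]. lra.
  destruct (HG x Hx (eps/2)) as [d2 [Hd2 H2]]. lra.
  exists (Rmin d1 d2). split. apply Rmin_pos; lra. intros y Hy Hd.
  pose proof (Rmin_l d1 d2). pose proof (Rmin_r d1 d2).
  specialize (H1 y Hy ltac:(lra)). specialize (H2 y Hy ltac:(lra)).
  replace (F y + G y - (F x + G x)) with ((F y - F x) + (G y - G x)) by ring.
  pose proof (Rabs_triang (F y - F x) (G y - G x)). lra. Qed.

Lemma cont_scale {n} (S : vec n -> Prop) c F : vcontinuous_on S F -> vcontinuous_on S (fun x => c * F x).
Proof. intros HF x Hx eps He. destruct (HF x Hx (eps / (Rabs c + 1))) as [d [Hd H1]].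
  apply Rdiv_lt_0_compat; [lra|]. pose proof (Rabs_pos c); lra.
  exists d. split; auto. intros y Hy Hdy. specialize (H1 y Hy Hdy).
  replace (c * F y - c * F x) with (c * (F y - F x)) by ring. rewrite Rabs_mult.
  pose proof (Rabs_pos c). pose proof (Rabs_pos (F y - F x)).
  assert (Rabs c * Rabs (F y - F x) <= Rabs c * (eps / (Rabs c + 1))) by (apply Rmult_le_compat_l; lra).
  assert (Rabs c * (eps / (Rabs c + 1)) < eps). { assert (E : eps / (Rabs c+1) * (Rabs c+1) = eps) by (field; lra).
    assert (0 < eps / (Rabs c+1)) by (apply Rdiv_lt_0_compat; lra). nra. } lra. Qed.

Lemma cont_const {n} (S : vec n -> Prop) c : vcontinuous_on S (fun _ => c).
Proof. intros x Hx eps He. exists 1. split. lra. intros. rewrite Rminus_diag, Rabs_R0. lra. Qed.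

Lemma vsub_split {n} (z x x0 : vec n) : vsub z x0 = vadd (vsub z x) (vsub x x0).
Proof. extensionality i. unfold vsub, vadd. ring. Qed.

Lemma cont_dot {n} (S : vec n -> Prop) c x0 : vcontinuous_on S (fun z => dot c (vsub z x0)).
Proof. apply cont_lip. intros x Hx. exists (vnorm c). split. apply vnorm_nonneg. intros y Hy _.
  rewrite (vsub_split y x x0), dot_add_r. replace (dot c (vsub y x) + dot c (vsub x x0) - dot c (vsub x x0)) with (dot c (vsub y x)) by ring.
  apply CS. Qed.

Lemma cont_dotmv {m n} (S : vec n -> Prop) (A : mat m n) y x0 : vcontinuous_on S (fun z => dot y (mv A (vsub z x0))).
Proof. apply cont_lip. intros x Hx. exists (vnorm y * mxC A). split.
  apply Rmult_le_pos. apply vnorm_nonneg. apply sqrt_pos. intros z Hz _.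
  rewrite (vsub_split z x x0), mv_add, dot_add_r.
  replace (dot y (mv A (vsub z x)) + dot y (mv A (vsub x x0)) - dot y (mv A (vsub x x0))) with (dot y (mv A (vsub z x))) by ring.
  eapply Rle_trans. apply CS. rewrite Rmult_assoc. apply Rmult_le_compat_l. apply vnorm_nonneg. apply mv_bound. Qed.

Lemma cont_sq {n} (S : vec n -> Prop) x0 : vcontinuous_on S (fun z => vnorm (vsub z x0) ^ 2).
Proof. apply cont_lip. intros x Hx. exists (2 * vnorm (vsub x x0) + 1). split.
  pose proof (vnorm_nonneg (vsub x x0)); lra. intros z Hz H1.
  rewrite !vnorm_sq, (vsub_split z x x0), dot_add_l, !dot_add_r, (dot_comm (vsub x x0) (vsub z x)).
  replace (dot (vsub z x) (vsub z x) + dot (vsub z x) (vsub x x0) + (dot (vsub z x) (vsub x x0) + dot (vsub x x0) (vsub x x0)) -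
     dot (vsub x x0) (vsub x x0)) with (dot (vsub z x) (vsub z x) + 2 * dot (vsub z x) (vsub x x0)) by ring.
  eapply Rle_trans. apply Rabs_triang. rewrite Rabs_mult, (Rabs_right 2) by lra.
  rewrite Rabs_right by (apply Rle_ge, dot_nonneg). rewrite <- vnorm_sq.
  pose proof (CS (vsub z x) (vsub x x0)). pose proof (vnorm_nonneg (vsub z x)). pose proof (vnorm_nonneg (vsub x x0)).
  nra. Qed.

Lemma vadd_sub {n} (x y : vec n) : vadd x (vsub y x) = y.
Proof. extensionality i. unfold vadd, vsub. ring. Qed.

Lemma cont_grad {n} (S : vec n -> Prop) f g : is_gradient f g -> vcontinuous_on S f.
Proof. intros Hg x _ eps He. destruct (Hg x 1 ltac:(lra)) as [d [Hd H]].
  pose proof (vnorm_nonneg (g x)).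
  exists (Rmin d (eps / (vnorm (g x) + 2))). split. apply Rmin_pos; auto. apply Rdiv_lt_0_compat; lra.
  intros y _ Hy. pose proof (Rmin_l d (eps / (vnorm (g x) + 2))). pose proof (Rmin_r d (eps / (vnorm (g x) + 2))).
  pose proof (vnorm_nonneg (vsub y x)) as Hn.
  specialize (H (vsub y x) ltac:(lra)). rewrite vadd_sub in H.
  pose proof (CS (g x) (vsub y x)).
  replace (f y - f x) with ((f y - f x - dot (g x) (vsub y x)) + dot (g x) (vsub y x)) by ring.
  eapply Rle_lt_trans. apply Rabs_triang.
  assert (E : eps / (vnorm (g x) + 2) * (vnorm (g x) + 2) = eps) by (field; lra).
  assert (0 < eps / (vnorm (g x) + 2)) by (apply Rdiv_lt_0_compat; lra).
  assert ((vnorm (g x) + 2) * vnorm (vsub y x) < (vnorm (g x) + 2) * (eps / (vnorm (g x) + 2))) by (apply Rmult_lt_compat_l; lra).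
  nra. Qed.

Lemma cont_dotmv0 {m n} (S : vec n -> Prop) (A : mat m n) y : vcontinuous_on S (fun z => dot y (mv A z)).
Proof. pose proof (cont_dotmv S A y vzero) as H.
  replace (fun z => dot y (mv A (vsub z vzero))) with (fun z => dot y (mv A z)) in H; auto.
  extensionality z. f_equal. f_equal. extensionality i. unfold vsub, vzero. ring. Qed.

Definition setok {n} (X : vec n -> Prop) := vnonempty X /\ vclosed X /\ vconvex_set X /\ vbounded X.

Lemma xstar_spec {n1 n2 m} (X1 : vec n1 -> Prop) (X2 : vec n2 -> Prop) phi1 phi2 g1 g2
  (A1 : mat m n1) (A2 : mat m n2) b p1 p2 s1 s2 y beta :
  setok X1 -> setok X2 -> prox_function X1 s1 p1 -> prox_function X2 s2 p2 ->
  is_gradient phi1 g1 -> is_gradient phi2 g2 ->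
  Xprod X1 X2 (xstar X1 X2 phi1 phi2 A1 A2 b p1 p2 y beta) /\
  forall z, Xprod X1 X2 z -> dobj phi1 phi2 A1 A2 b p1 p2 y beta (xstar X1 X2 phi1 phi2 A1 A2 b p1 p2 y beta)
     <= dobj phi1 phi2 A1 A2 b p1 p2 y beta z.
Proof. intros [Hn1 [Hc1 [_ Hb1]]] [Hn2 [Hc2 [_ Hb2]]] [Hp1 _] [Hp2 _] Hg1 Hg2.
  assert (Hdec : forall x1 x2, dobj phi1 phi2 A1 A2 b p1 p2 y beta (x1, x2) =
     (phi1 x1 + dot y (mv A1 x1) + beta * p1 x1) + (phi2 x2 + dot y (mv A2 x2) + beta * p2 x2) - dot y b).
  { intros. unfold dobj, phi, Aop. simpl. rewrite dot_sub_r, dot_add_r. ring. }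
  destruct (evt X1 (fun z => phi1 z + dot y (mv A1 z) + beta * p1 z)) as [m1 [Hm1 Hm1']]; auto.
  { apply cont_add. apply cont_add. eapply cont_grad; eauto. apply cont_dotmv0. apply cont_scale; auto. }
  destruct (evt X2 (fun z => phi2 z + dot y (mv A2 z) + beta * p2 z)) as [m2 [Hm2 Hm2']]; auto.
  { apply cont_add. apply cont_add. eapply cont_grad; eauto. apply cont_dotmv0. apply cont_scale; auto. }
  unfold xstar, argmin. apply epsilon_spec. exists (m1, m2). split. split; auto.
  intros [z1 z2] [Hz1 Hz2]. simpl in *. rewrite !Hdec.
  specialize (Hm1' z1 Hz1). specialize (Hm2' z2 Hz2). lra. Qed.

Lemma Gblock_spec {n m} (Xi : vec n -> Prop) (gradi : vec n -> vec n) (Ai : mat m n) Lhat ys xhi :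
  setok Xi ->
  Xi (Gblock Xi gradi Ai Lhat ys xhi) /\ forall z, Xi z ->
  dot (gradi xhi) (vsub (Gblock Xi gradi Ai Lhat ys xhi) xhi) + dot ys (mv Ai (vsub (Gblock Xi gradi Ai Lhat ys xhi) xhi))
    + Lhat / 2 * (vnorm (vsub (Gblock Xi gradi Ai Lhat ys xhi) xhi))^2 <=
  dot (gradi xhi) (vsub z xhi) + dot ys (mv Ai (vsub z xhi)) + Lhat / 2 * (vnorm (vsub z xhi))^2.
Proof. intros [Hn [Hc [_ Hb]]]. unfold Gblock.
  apply (argmin_spec Xi (fun z => dot (gradi xhi) (vsub z xhi) + dot ys (mv Ai (vsub z xhi)) + Lhat / 2 * (vnorm (vsub z xhi))^2)); auto.
  apply cont_add. apply cont_add. apply cont_dot. apply cont_dotmv. apply cont_scale. apply cont_sq. Qed.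

Lemma vcomb_eq {n} (x y : vec n) t : vadd (vscale t y) (vscale (1 - t) x) = vadd x (vscale t (vsub y x)).
Proof. extensionality i. unfold vadd, vscale, vsub. ring. Qed.

Lemma grad_ineq {n} (f : vec n -> R) g : convex_fun f -> is_gradient f g ->
  forall x y, f x + dot (g x) (vsub y x) <= f y.
Proof. intros Hc Hg x y. set (d := vsub y x).
  assert (H : forall eps, eps > 0 -> dot (g x) d <= f y - f x + eps * vnorm d).
  { intros eps He. destruct (Hg x eps He) as [del [Hdel H]].
    pose proof (vnorm_nonneg d).
    set (t := Rmin 1 (del / (2 * (vnorm d + 1)))).
    assert (Ht0 : 0 < t). { apply Rmin_pos. lra. apply Rdiv_lt_0_compat; lra. }
    assert (Ht1 : t <= 1) by apply Rmin_l.
    assert (Ht2 : t <= del / (2 * (vnorm d + 1))) by apply Rmin_r.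
    assert (Hn : vnorm (vscale t d) < del).
    { rewrite vnorm_scale, Rabs_right by lra.
      assert (E : del / (2 * (vnorm d + 1)) * (2 * (vnorm d + 1)) = del) by (field; lra).
      assert (t * vnorm d <= del / (2 * (vnorm d + 1)) * vnorm d) by (apply Rmult_le_compat_r; lra).
      assert (0 < del / (2 * (vnorm d + 1))) by (apply Rdiv_lt_0_compat; lra). nra. }
    specialize (H _ Hn). specialize (Hc y x t ltac:(lra)). rewrite vcomb_eq in Hc. fold d in Hc.
    rewrite dot_scale_r, vnorm_scale, (Rabs_right t) in H by lra.
    pose proof (Rle_abs (-(f (vadd x (vscale t d)) - f x - t * dot (g x) d))). rewrite Rabs_Ropp in *.
    assert (t * dot (g x) d <= t * (f y - f x + eps * vnorm d)) by nra.
    apply Rmult_le_reg_l with t; lra. }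
  destruct (Rle_or_lt (dot (g x) d) (f y - f x)). lra.
  exfalso. pose proof (vnorm_nonneg d).
  set (eps := (dot (g x) d - (f y - f x)) / (2 * (vnorm d + 1))).
  assert (He : eps > 0) by (unfold eps; apply Rdiv_lt_0_compat; lra).
  specialize (H eps He).
  assert (E : eps * (2 * (vnorm d + 1)) = dot (g x) d - (f y - f x)) by (unfold eps; field; lra).
  nra. Qed.

Lemma line_deriv {n} (f : vec n -> R) g x d t : is_gradient f g ->
  derivable_pt_lim (fun s => f (vadd x (vscale s d))) t (dot (g (vadd x (vscale t d))) d).
Proof. intros Hg eps He. set (p := vadd x (vscale t d)). pose proof (vnorm_nonneg d) as Hnd.
  destruct (Hg p (eps / (2 * (vnorm d + 1)))) as [del [Hdel H]]. apply Rdiv_lt_0_compat; lra.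
  assert (Hpos : 0 < del / (vnorm d + 1)) by (apply Rdiv_lt_0_compat; lra).
  exists (mkposreal _ Hpos). simpl. intros h Hh0 Hh.
  assert (Ep : vadd x (vscale (t + h) d) = vadd p (vscale h d)).
  { unfold p. extensionality i. unfold vadd, vscale. ring. }
  rewrite Ep. fold p.
  assert (Hn : vnorm (vscale h d) < del).
  { rewrite vnorm_scale. pose proof (Rabs_pos h).
    assert (E : del / (vnorm d + 1) * (vnorm d + 1) = del) by (field; lra).
    assert (Rabs h * (vnorm d + 1) < del / (vnorm d + 1) * (vnorm d + 1)) by (apply Rmult_lt_compat_r; lra).
    nra. }
  specialize (H _ Hn). rewrite dot_scale_r, vnorm_scale in H.
  replace ((f (vadd p (vscale h d)) - f p) / h - dot (g p) d) with ((f (vadd p (vscale h d)) - f p - h * dot (g p) d) / h)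
    by (field; auto).
  unfold Rdiv. rewrite Rabs_mult, Rabs_inv.
  assert (Ha : 0 < Rabs h) by (apply Rabs_pos_lt; auto).
  apply Rmult_lt_reg_r with (Rabs h); auto. rewrite Rmult_assoc, Rinv_l by lra. rewrite Rmult_1_r.
  eapply Rle_lt_trans. apply H.
  assert (E : eps / (2 * (vnorm d + 1)) * (2 * (vnorm d + 1)) = eps) by (field; lra).
  assert (0 < eps / (2 * (vnorm d + 1))) by (apply Rdiv_lt_0_compat; lra).
  nra. Qed.

Lemma quad_deriv a K c : derivable_pt_lim (fun t => a * t + K * (t * t)) c (a + 2 * K * c).
Proof. intros eps He. pose proof (Rabs_pos K).
  assert (Hpos : 0 < eps / (Rabs K + 1)) by (apply Rdiv_lt_0_compat; lra).
  exists (mkposreal _ Hpos). simpl. intros h Hh0 Hh.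
  replace ((a * (c + h) + K * ((c + h) * (c + h)) - (a * c + K * (c * c))) / h - (a + 2 * K * c)) with (K * h) by (field; auto).
  rewrite Rabs_mult. pose proof (Rabs_pos h).
  assert (E : eps / (Rabs K + 1) * (Rabs K + 1) = eps) by (field; lra). nra. Qed.

Lemma descent {n} (f : vec n -> R) g L : is_gradient f g -> lipschitz g L -> L >= 0 ->
  forall x y, f y <= f x + dot (g x) (vsub y x) + L / 2 * vnorm (vsub y x) ^ 2.
Proof. intros Hg Hl HL x y. set (d := vsub y x).
  set (a := dot (g x) d). set (K := L / 2 * vnorm d ^ 2).
  set (k := fun t => f (vadd x (vscale t d)) - (a * t + K * (t * t))).
  set (k' := fun t => dot (g (vadd x (vscale t d))) d - (a + 2 * K * t)).
  destruct (MVT_cor2 k k' 0 1) as [c [Hc1 Hc2]]. lra.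
  { intros c _. unfold k, k'. apply (derivable_pt_lim_minus (fun s => f (vadd x (vscale s d))) (fun t => a * t + K * (t * t))).
    apply line_deriv; auto. apply quad_deriv. }
  assert (E0 : vadd x (vscale 0 d) = x) by (extensionality i; unfold vadd, vscale; ring).
  assert (E1 : vadd x (vscale 1 d) = y) by (extensionality i; unfold d, vadd, vscale, vsub; ring).
  unfold k in Hc1. rewrite E0, E1 in Hc1.
  assert (Hk' : k' c <= 0).
  { unfold k'. set (pc := vadd x (vscale c d)).
    assert (Hd : dot (g pc) d - a = dot (vsub (g pc) (g x)) d) by (unfold a; rewrite dot_sub_l; ring).
    pose proof (CS (vsub (g pc) (g x)) d). pose proof (Rle_abs (dot (vsub (g pc) (g x)) d)).
    pose proof (Hl pc x).
    assert (Ev : vsub pc x = vscale c d) by (unfold pc; extensionality i; unfold vsub, vadd, vscale; ring).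
    rewrite Ev, vnorm_scale, Rabs_right in H1 by lra.
    pose proof (vnorm_nonneg d). pose proof (vnorm_nonneg (vsub (g pc) (g x))).
    unfold K. rewrite vnorm_sq. rewrite <- vnorm_sq.
    assert (vnorm (vsub (g pc) (g x)) * vnorm d <= L * (c * vnorm d) * vnorm d) by (apply Rmult_le_compat_r; lra).
    nra. }
  unfold K, a in *. fold d. nra. Qed.

Lemma aop_comb {n1 n2 m} (A1 : mat m n1) (A2 : mat m n2) b a u1 u2 v1 v2 :
  vsub (Aop A1 A2 (vadd (vscale a u1) (vscale (1 - a) v1), vadd (vscale a u2) (vscale (1 - a) v2))) b =
  vadd (vscale a (vsub (Aop A1 A2 (u1, u2)) b)) (vscale (1 - a) (vsub (Aop A1 A2 (v1, v2)) b)).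
Proof. unfold Aop. simpl. rewrite !mv_add, !mv_scale. extensionality i. unfold vsub, vadd, vscale. ring. Qed.

Lemma strong_growth {n1 n2 m} (X1 : vec n1 -> Prop) (X2 : vec n2 -> Prop) phi1 phi2
  (A1 : mat m n1) (A2 : mat m n2) b p1 p2 s1 s2 y beta xs x :
  setok X1 -> setok X2 -> convex_fun phi1 -> convex_fun phi2 ->
  prox_function X1 s1 p1 -> prox_function X2 s2 p2 -> beta >= 0 -> s1 > 0 -> s2 > 0 ->
  Xprod X1 X2 xs -> (forall z, Xprod X1 X2 z -> dobj phi1 phi2 A1 A2 b p1 p2 y beta xs <= dobj phi1 phi2 A1 A2 b p1 p2 y beta z) ->
  Xprod X1 X2 x ->
  dobj phi1 phi2 A1 A2 b p1 p2 y beta xs + beta * (s1 / 2 * vnorm (vsub (fst x) (fst xs)) ^ 2 + s2 / 2 * vnorm (vsub (snd x) (snd xs)) ^ 2)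
  <= dobj phi1 phi2 A1 A2 b p1 p2 y beta x.
Proof. intros [_ [_ [Hcv1 _]]] [_ [_ [Hcv2 _]]] Hc1 Hc2 [_ [Hs1 _]] [_ [Hs2 _]] Hb Hsg1 Hsg2 Hxs Hmin Hx.
  destruct xs as [s1v s2v]. destruct x as [x1 x2]. destruct Hxs as [Hxs1 Hxs2]. destruct Hx as [Hx1 Hx2]. cbn [fst snd] in *.
  set (D := dobj phi1 phi2 A1 A2 b p1 p2 y beta (x1, x2) - dobj phi1 phi2 A1 A2 b p1 p2 y beta (s1v, s2v)).
  set (Q := beta * (s1 / 2 * vnorm (vsub x1 s1v) ^ 2 + s2 / 2 * vnorm (vsub x2 s2v) ^ 2)).
  assert (H : forall t, 0 < t <= 1 -> (1 - t) * Q <= D).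
  { intros t Ht.
    set (z := (vadd (vscale t x1) (vscale (1 - t) s1v), vadd (vscale t x2) (vscale (1 - t) s2v))).
    assert (Hz : Xprod X1 X2 z). { unfold Xprod, z; simpl; split; [apply Hcv1|apply Hcv2]; auto; lra. }
    specialize (Hmin z Hz).
    assert (Hle : dobj phi1 phi2 A1 A2 b p1 p2 y beta z <= t * dobj phi1 phi2 A1 A2 b p1 p2 y beta (x1, x2)
       + (1 - t) * dobj phi1 phi2 A1 A2 b p1 p2 y beta (s1v, s2v) - t * (1 - t) * Q).
    { unfold dobj, z, phi. simpl. rewrite aop_comb, dot_add_r, !dot_scale_r.
      specialize (Hc1 x1 s1v t ltac:(lra)). specialize (Hc2 x2 s2v t ltac:(lra)).
      specialize (Hs1 x1 s1v t Hx1 Hxs1 ltac:(lra)). specialize (Hs2 x2 s2v t Hx2 Hxs2 ltac:(lra)).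
      unfold Q. simpl.
      assert (beta * p1 (vadd (vscale t x1) (vscale (1 - t) s1v)) <= beta * (t * p1 x1 + (1 - t) * p1 s1v - s1 / 2 * t * (1 - t) * vnorm (vsub x1 s1v) ^ 2)) by (apply Rmult_le_compat_l; lra).
      assert (beta * p2 (vadd (vscale t x2) (vscale (1 - t) s2v)) <= beta * (t * p2 x2 + (1 - t) * p2 s2v - s2 / 2 * t * (1 - t) * vnorm (vsub x2 s2v) ^ 2)) by (apply Rmult_le_compat_l; lra).
      nra. }
    unfold D. assert (t * ((1 - t) * Q) <= t * D) by (unfold D; lra). apply Rmult_le_reg_l with t; lra. }
  assert (HQ : 0 <= Q). { unfold Q. pose proof (pow2_ge_0 (vnorm (vsub x1 s1v))). pose proof (pow2_ge_0 (vnorm (vsub x2 s2v))).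
    assert (0 <= s1 / 2 * vnorm (vsub x1 s1v) ^ 2) by (apply Rmult_le_pos; lra).
    assert (0 <= s2 / 2 * vnorm (vsub x2 s2v) ^ 2) by (apply Rmult_le_pos; lra).
    apply Rmult_le_pos; lra. }
  fold Q. destruct (Rle_or_lt Q D) as [HD|HD]. unfold D in HD; lra. exfalso.
  pose proof (H 1 ltac:(lra)) as H1.
  assert (HQp : 0 < Q) by lra.
  set (t := (Q - D) / (2 * Q)).
  assert (Et : t * (2 * Q) = Q - D) by (unfold t; field; lra).
  assert (0 < t <= 1) by (split; nra).
  specialize (H t H0). nra. Qed.
Theorem mainTheorem4
  (n1 n2 m : nat)
  (X1 : vec n1 -> Prop) (X2 : vec n2 -> Prop)
  (phi1 : vec n1 -> R) (phi2 : vec n2 -> R)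
  (grad1 : vec n1 -> vec n1) (grad2 : vec n2 -> vec n2)
  (Lphi1 Lphi2 : R)
  (A1 : mat m n1) (A2 : mat m n2) (b : vec m)
  (p1 : vec n1 -> R) (p2 : vec n2 -> R) (sigma1 sigma2 : R)
  (beta1 beta2 tau : R)
  (xbar : vec n1 * vec n2) (ybar : vec m)
  (HX1 : vnonempty X1 /\ vclosed X1 /\ vconvex_set X1 /\ vbounded X1)
  (HX2 : vnonempty X2 /\ vclosed X2 /\ vconvex_set X2 /\ vbounded X2)
  (Hphi1 : convex_fun phi1) (Hphi2 : convex_fun phi2)
  (Hs1 : sigma1 > 0) (Hs2 : sigma2 > 0)
  (Hp1 : prox_function X1 sigma1 p1) (Hp2 : prox_function X2 sigma2 p2)
  (Hg1 : is_gradient phi1 grad1) (Hg2 : is_gradient phi2 grad2)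
  (HL1 : Lphi1 >= 0) (HL2 : Lphi2 >= 0)
  (Hlip1 : lipschitz grad1 Lphi1) (Hlip2 : lipschitz grad2 Lphi2)
  (Hb1 : beta1 > 0) (Hb2 : beta2 > 0) (Htau : 0 < tau < 1)
  (Hxbar : Xprod X1 X2 xbar)
  (Hgap : ffun phi1 phi2 A1 A2 b xbar beta2 <= dfun X1 X2 phi1 phi2 A1 A2 b p1 p2 ybar beta1)
  (Hcond1 : (1 - tau) / tau ^ 2 * beta1 * sigma1 >=
            Lphi1 + 2 * (opnorm A1) ^ 2 / ((1 - tau) * beta2))
  (Hcond2 : (1 - tau) / tau ^ 2 * beta1 * sigma2 >=
            Lphi2 + 2 * (opnorm A2) ^ 2 / ((1 - tau) * beta2)) :
  let beta1p := (1 - tau) * beta1 in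
  let beta2p := (1 - tau) * beta2 in
  let xs := xstar X1 X2 phi1 phi2 A1 A2 b p1 p2 ybar beta1 in
  let xhat := (vadd (vscale (1 - tau) (fst xbar)) (vscale tau (fst xs)),
               vadd (vscale (1 - tau) (snd xbar)) (vscale tau (snd xs))) in
  let ys := ystar A1 A2 b xhat beta2p in
  let ybarp := vadd (vscale (1 - tau) ybar) (vscale tau ys) in
  let Lhat1 := Lphi1 + 2 * (opnorm A1) ^ 2 / beta2p in
  let Lhat2 := Lphi2 + 2 * (opnorm A2) ^ 2 / beta2p in
  let xplus := (Gblock X1 grad1 A1 Lhat1 ys (fst xhat),
                Gblock X2 grad2 A2 Lhat2 ys (snd xhat)) in
  Xprod X1 X2 xplus /\
  ffun phi1 phi2 A1 A2 b xplus beta2p <= dfun X1 X2 phi1 phi2 A1 A2 b p1 p2 ybarp beta1p.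
Proof.
  intros beta1p beta2p xs xhat ys ybarp Lhat1 Lhat2 xplus.
  assert (HX1' : setok X1) by exact HX1. assert (HX2' : setok X2) by exact HX2.
  destruct xbar as [a1 a2]. destruct Hxbar as [Ha1 Ha2]. cbn [fst snd] in *.
  destruct (xstar_spec X1 X2 phi1 phi2 grad1 grad2 A1 A2 b p1 p2 sigma1 sigma2 ybar beta1 HX1' HX2' Hp1 Hp2 Hg1 Hg2) as [Hxs Hxsmin].
  fold xs in Hxs, Hxsmin.
  set (w := xstar X1 X2 phi1 phi2 A1 A2 b p1 p2 ybarp beta1p).
  destruct (xstar_spec X1 X2 phi1 phi2 grad1 grad2 A1 A2 b p1 p2 sigma1 sigma2 ybarp beta1p HX1' HX2' Hp1 Hp2 Hg1 Hg2) as [Hw _].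
  fold w in Hw.
  destruct (Gblock_spec X1 grad1 A1 Lhat1 ys (fst xhat) HX1') as [HG1 HG1min].
  destruct (Gblock_spec X2 grad2 A2 Lhat2 ys (snd xhat) HX2') as [HG2 HG2min].
  split. { split; assumption. }
  destruct HX1 as [_ [_ [Hcv1 _]]]. destruct HX2 as [_ [_ [Hcv2 _]]].
  destruct Hxs as [Hxs1 Hxs2]. destruct Hw as [Hw1 Hw2].
  set (s1v := fst xs) in *. set (s2v := snd xs) in *.
  set (w1 := fst w) in *. set (w2 := snd w) in *.
  set (h1 := fst xhat). set (h2 := snd xhat).
  set (g1 := fst xplus) in *. set (g2 := snd xplus) in *.
  assert (Eh1 : h1 = vadd (vscale (1 - tau) a1) (vscale tau s1v)) by reflexivity.
  assert (Eh2 : h2 = vadd (vscale (1 - tau) a2) (vscale tau s2v)) by reflexivity.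
  pose proof (grad_ineq phi1 grad1 Hphi1 Hg1 h1 a1) as Fa1.
  pose proof (grad_ineq phi2 grad2 Hphi2 Hg2 h2 a2) as Fa2.
  pose proof (grad_ineq phi1 grad1 Hphi1 Hg1 h1 w1) as Fw1.
  pose proof (grad_ineq phi2 grad2 Hphi2 Hg2 h2 w2) as Fw2.
  pose proof (descent phi1 grad1 Lphi1 Hg1 Hlip1 HL1 h1 g1) as Fd1.
  pose proof (descent phi2 grad2 Lphi2 Hg2 Hlip2 HL2 h2 g2) as Fd2.
  assert (Fc1 : (1 - tau) * dot (grad1 h1) (vsub a1 h1) + tau * dot (grad1 h1) (vsub w1 h1) = tau * dot (grad1 h1) (vsub w1 s1v)).
  { rewrite <- !dot_scale_r, <- dot_add_r. f_equal. rewrite Eh1. extensionality i. unfold vadd, vscale, vsub. ring. }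
  assert (Fc2 : (1 - tau) * dot (grad2 h2) (vsub a2 h2) + tau * dot (grad2 h2) (vsub w2 h2) = tau * dot (grad2 h2) (vsub w2 s2v)).
  { rewrite <- !dot_scale_r, <- dot_add_r. f_equal. rewrite Eh2. extensionality i. unfold vadd, vscale, vsub. ring. }
  assert (Hz1 : X1 (vadd (vscale (1 - tau) a1) (vscale tau w1))).
  { replace tau with (1 - (1 - tau)) at 2 by ring. apply Hcv1; auto; lra. }
  assert (Hz2 : X2 (vadd (vscale (1 - tau) a2) (vscale tau w2))).
  { replace tau with (1 - (1 - tau)) at 2 by ring. apply Hcv2; auto; lra. }
  specialize (HG1min _ Hz1). specialize (HG2min _ Hz2). fold h1 g1 in HG1min. fold h2 g2 in HG2min.
  assert (Ez1 : vsub (vadd (vscale (1 - tau) a1) (vscale tau w1)) h1 = vscale tau (vsub w1 s1v)).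
  { rewrite Eh1. extensionality i. unfold vadd, vscale, vsub. ring. }
  assert (Ez2 : vsub (vadd (vscale (1 - tau) a2) (vscale tau w2)) h2 = vscale tau (vsub w2 s2v)).
  { rewrite Eh2. extensionality i. unfold vadd, vscale, vsub. ring. }
  rewrite Ez1, mv_scale, !dot_scale_r, vnorm_scale, (Rabs_right tau) in HG1min by lra.
  rewrite Ez2, mv_scale, !dot_scale_r, vnorm_scale, (Rabs_right tau) in HG2min by lra.
  assert (Fk1 : Lhat1 * tau ^ 2 <= (1 - tau) * beta1 * sigma1).
  { unfold Lhat1, beta2p. assert (0 < tau ^ 2) by (apply pow_lt; lra).
    apply Rge_le in Hcond1. apply Rmult_le_compat_r with (r := tau ^ 2) in Hcond1; [|lra].
    replace ((1 - tau) / tau ^ 2 * beta1 * sigma1 * tau ^ 2) with ((1 - tau) * beta1 * sigma1) in Hcond1 by (field; lra). lra. }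
  assert (Fk2 : Lhat2 * tau ^ 2 <= (1 - tau) * beta1 * sigma2).
  { unfold Lhat2, beta2p. assert (0 < tau ^ 2) by (apply pow_lt; lra).
    apply Rge_le in Hcond2. apply Rmult_le_compat_r with (r := tau ^ 2) in Hcond2; [|lra].
    replace ((1 - tau) / tau ^ 2 * beta1 * sigma2 * tau ^ 2) with ((1 - tau) * beta1 * sigma2) in Hcond2 by (field; lra). lra. }
  assert (Hb2p : 0 < beta2p) by (unfold beta2p; nra).
  set (r := vsub (Aop A1 A2 xhat) b).
  set (d1 := mv A1 (vsub g1 h1)). set (d2 := mv A2 (vsub g2 h2)).
  assert (Eys : ys = vscale (1 / beta2p) r) by reflexivity.
  assert (Ee : vsub (Aop A1 A2 xplus) b = vadd r (vadd d1 d2)).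
  { unfold r, d1, d2, Aop. rewrite !mv_sub. extensionality i. unfold vadd, vsub. fold g1 g2 h1 h2. ring. }
  assert (Fdd : dot (vadd d1 d2) (vadd d1 d2) <= 2 * dot d1 d1 + 2 * dot d2 d2).
  { pose proof (dot_nonneg (vsub d1 d2)). rewrite !dot_sub_l, !dot_sub_r in H.
    rewrite !dot_add_l, !dot_add_r. rewrite (dot_comm d2 d1) in *. lra. }
  assert (Fo1 : dot d1 d1 <= opnorm A1 ^ 2 * vnorm (vsub g1 h1) ^ 2).
  { rewrite <- vnorm_sq. pose proof (opnorm_bound A1 (vsub g1 h1)). pose proof (vnorm_nonneg d1). fold d1 in H. 
    rewrite <- Rpow_mult_distr. apply pow_incr. lra. }
  assert (Fo2 : dot d2 d2 <= opnorm A2 ^ 2 * vnorm (vsub g2 h2) ^ 2).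
  { rewrite <- vnorm_sq. pose proof (opnorm_bound A2 (vsub g2 h2)). pose proof (vnorm_nonneg d2). fold d2 in H. 
    rewrite <- Rpow_mult_distr. apply pow_incr. lra. }
  assert (Fyd1 : dot ys d1 = 1 / beta2p * dot r d1) by (rewrite Eys, dot_scale_l; reflexivity).
  assert (Fyd2 : dot ys d2 = 1 / beta2p * dot r d2) by (rewrite Eys, dot_scale_l; reflexivity).
  assert (FA : ffun phi1 phi2 A1 A2 b xplus beta2p <= phi1 g1 + phi2 g2 + 1 / (2 * beta2p) * dot r r
     + dot ys d1 + dot ys d2 + opnorm A1 ^ 2 / beta2p * vnorm (vsub g1 h1) ^ 2 + opnorm A2 ^ 2 / beta2p * vnorm (vsub g2 h2) ^ 2).
  { unfold ffun, phi. fold g1 g2. rewrite Ee, vnorm_sq, dot_add_l, !dot_add_r, (dot_comm (vadd d1 d2) r), dot_add_r.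
    rewrite Fyd1, Fyd2.
    assert (Hpos : 0 < 1 / (2 * beta2p)) by (apply Rdiv_lt_0_compat; lra).
    set (T := dot r r + 2 * dot r d1 + 2 * dot r d2 + 2 * (opnorm A1 ^ 2 * vnorm (vsub g1 h1) ^ 2) + 2 * (opnorm A2 ^ 2 * vnorm (vsub g2 h2) ^ 2)).
    assert (HT : dot r r + (dot r d1 + dot r d2) + (dot r d1 + dot r d2 + (dot (vadd d1 d2) d1 + dot (vadd d1 d2) d2)) <= T) by (rewrite <- (dot_add_r d1 d2 (vadd d1 d2)); unfold T; lra).
    eapply Rle_trans. apply Rplus_le_compat_l. apply Rmult_le_compat_l. lra. exact HT.
    unfold T. apply Req_le. field. lra. }
  pose proof (strong_growth X1 X2 phi1 phi2 A1 A2 b p1 p2 sigma1 sigma2 ybar beta1 xs w HX1' HX2' Hphi1 Hphi2 Hp1 Hp2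
     ltac:(lra) Hs1 Hs2 (conj Hxs1 Hxs2) Hxsmin (conj Hw1 Hw2)) as FE.
  change (fst w) with w1 in FE. change (snd w) with w2 in FE. change (fst xs) with s1v in FE. change (snd xs) with s2v in FE.
  assert (Edf : dfun X1 X2 phi1 phi2 A1 A2 b p1 p2 ybar beta1 = dobj phi1 phi2 A1 A2 b p1 p2 ybar beta1 xs) by reflexivity.
  assert (FH : dfun X1 X2 phi1 phi2 A1 A2 b p1 p2 ybarp beta1p =
     (1 - tau) * dobj phi1 phi2 A1 A2 b p1 p2 ybar beta1 w + tau * (phi1 w1 + phi2 w2 + dot ys (vsub (Aop A1 A2 w) b))).
  { unfold dfun. fold w. unfold dobj, ybarp, beta1p. rewrite dot_add_l, !dot_scale_l. unfold phi. fold w1 w2. ring. }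
  set (u := vsub (Aop A1 A2 (a1, a2)) b). set (q := vsub (Aop A1 A2 xs) b). set (v := vsub (Aop A1 A2 w) b).
  assert (Er : r = vadd (vscale (1 - tau) u) (vscale tau q)).
  { unfold r, u, q, Aop. change (fst xhat) with h1. change (snd xhat) with h2. rewrite Eh1, Eh2, !mv_add, !mv_scale.
    extensionality i. unfold vadd, vsub, vscale. cbn [fst snd]. change (fst xs) with s1v. change (snd xs) with s2v. ring. }
  assert (Evq : vsub v q = vadd (mv A1 (vsub w1 s1v)) (mv A2 (vsub w2 s2v))).
  { unfold v, q, Aop. rewrite !mv_sub. extensionality i. unfold vadd, vsub. change (fst xs) with s1v. change (snd xs) with s2v. change (fst w) with w1. change (snd w) with w2. ring. }
  assert (FI : (1 - tau) * (1 / (2 * beta2) * dot u u) + tau * dot ys v =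
     1 / (2 * beta2p) * dot r r + tau * (dot ys (mv A1 (vsub w1 s1v)) + dot ys (mv A2 (vsub w2 s2v))) + tau ^ 2 * dot q q / (2 * beta2p)).
  { replace (dot ys v) with (dot ys (vsub v q) + dot ys q) by (rewrite dot_sub_r; ring).
    rewrite Evq, dot_add_r. rewrite Eys, Er.
    rewrite !dot_scale_l, !dot_add_l, !dot_add_r, !dot_scale_l, !dot_scale_r, (dot_comm q u).
    unfold beta2p. field. lra. }
  assert (Fqq : 0 <= tau ^ 2 * dot q q / (2 * beta2p)).
  { apply Rmult_le_pos. apply Rmult_le_pos. apply pow2_ge_0. apply dot_nonneg. apply Rlt_le, Rinv_0_lt_compat. lra. }
  unfold ffun, phi in Hgap. cbn [fst snd] in Hgap. fold u in Hgap. rewrite vnorm_sq in Hgap.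
  assert (EL1 : Lhat1 / 2 * vnorm (vsub g1 h1) ^ 2 = Lphi1 / 2 * vnorm (vsub g1 h1) ^ 2 + opnorm A1 ^ 2 / beta2p * vnorm (vsub g1 h1) ^ 2)
    by (unfold Lhat1; field; lra).
  assert (EL2 : Lhat2 / 2 * vnorm (vsub g2 h2) ^ 2 = Lphi2 / 2 * vnorm (vsub g2 h2) ^ 2 + opnorm A2 ^ 2 / beta2p * vnorm (vsub g2 h2) ^ 2)
    by (unfold Lhat2; field; lra).
  assert (Mk1 : 0 <= ((1 - tau) * beta1 * sigma1 - Lhat1 * tau ^ 2) * vnorm (vsub w1 s1v) ^ 2)
    by (apply Rmult_le_pos; [lra | apply pow2_ge_0]).
  assert (Mk2 : 0 <= ((1 - tau) * beta1 * sigma2 - Lhat2 * tau ^ 2) * vnorm (vsub w2 s2v) ^ 2)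
    by (apply Rmult_le_pos; [lra | apply pow2_ge_0]).
  assert (M1 : 0 <= (1 - tau) * (dobj phi1 phi2 A1 A2 b p1 p2 ybar beta1 w - (dobj phi1 phi2 A1 A2 b p1 p2 ybar beta1 xs +
      beta1 * (sigma1 / 2 * vnorm (vsub w1 s1v) ^ 2 + sigma2 / 2 * vnorm (vsub w2 s2v) ^ 2)))) by (apply Rmult_le_pos; lra).
  assert (M2 : 0 <= (1 - tau) * (dfun X1 X2 phi1 phi2 A1 A2 b p1 p2 ybar beta1 - (phi1 a1 + phi2 a2 + 1 / (2 * beta2) * dot u u)))
    by (apply Rmult_le_pos; lra).
  assert (M3 : 0 <= (1 - tau) * (phi1 a1 - (phi1 h1 + dot (grad1 h1) (vsub a1 h1)))) by (apply Rmult_le_pos; lra).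
  assert (M4 : 0 <= (1 - tau) * (phi2 a2 - (phi2 h2 + dot (grad2 h2) (vsub a2 h2)))) by (apply Rmult_le_pos; lra).
  assert (M5 : 0 <= tau * (phi1 w1 - (phi1 h1 + dot (grad1 h1) (vsub w1 h1)))) by (apply Rmult_le_pos; lra).
  assert (M6 : 0 <= tau * (phi2 w2 - (phi2 h2 + dot (grad2 h2) (vsub w2 h2)))) by (apply Rmult_le_pos; lra).
  rewrite FH. fold v. change (Gblock X1 grad1 A1 Lhat1 ys h1) with g1 in HG1min. change (Gblock X2 grad2 A2 Lhat2 ys h2) with g2 in HG2min. fold d1 in HG1min. fold d2 in HG2min.
  rewrite Edf in M2.
  lra.
Qed.
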